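(* Let $\Omega>0$ denote the maximum absolute value of the stored quantities, let $C,D$ be column indices of $X\in\mathbb{R}^{K\times d}$ to be compared and $E$ a target column index. Then there exists a single transformer layer that simulates the comparison operation $X[:,E]\leftarrow (X[:,C]<X[:,D])$, i.e. it writes into each entry of column $E$ the value $1$ if the corresponding entry of column $C$ is less than that of column $D$, and $0$ otherwise.
   Context: Conventions: rows/columns indexed from $1$; $X[i,j]$ is the $(i,j)$ entry, $X[:,j]$ the $j$-th column. $\phi(x)=\max\{x,0\}$ entrywise. Hardmax $\sigma$: row $i$ of $\sigma(\Phi)$ is $\frac{1}{|S_i|}\sum_{k\in S_i}e_k$, $S_i=\{k:\Phi_{ik}=\max_j\Phi_{ij}\}$. For a weighted hypergraph with incident matrix $A\in\mathbb{R}^{n_v\times n_e}$ ($A_{ij}=w(e_j)$ if vertex $v_i\in e_j$, else $0$) and $K\ge\max\{n_v,n_e\}+1$, the padded incident matrix $\widetilde A\in\mathbb{R}^{K\times K}$ has $\widetilde A_{i+1,j+1}=A_{ij}$, zeros elsewhere. A transformer layer on $X\in\mathbb{R}^{K\times d}$ is $f(X,\widetilde A)=f_{\mathrm{mlp}}(f_{\mathrm{attn}}(X,\widetilde A))$, $f_{\mathrm{attn}}(X,\widetilde A)=\sum_{i\in M_A}\psi^{(i)}(X,\widetilde A)+\sum_{i\in M_{A^\top}}\psi^{(i)}(X,\widetilde A^\top)+\sum_{i\in M}\psi^{(i)}(X,I_K)+X$, $\psi(X,B)=B\,\sigma(XW_QW_K^\top X^\top)XW_V$ ($W_Q,W_K\in\mathbb{R}^{d\times2}$,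 $W_V\in\mathbb{R}^{d\times d}$), $f_{\mathrm{mlp}}(X)=Z^{(4)}W^{(4)}+X$, $Z^{(1)}=X$, $Z^{(j+1)}=\phi(Z^{(j)}W^{(j)})$ ($j=1,2,3$). Storage convention: scalars in the top row of a column (rest $0$), arrays of length $K-1$ in rows $2,\dots,K$ (top $0$); designated columns $B_{\mathrm{global}}$ (top $1$, rest $0$), $B_{\mathrm{local}}$ (top $0$, rest $1$), and scratchpad columns. ''Simulating an operation'' means the layer's weights can be chosen so that applying it to $X$ performs the stated update. *)

(* Defs.v *)
From HB Require Import structures.
From mathcomp Require Import all_boot all_order all_algebra.
Set Implicit Arguments. Unset Strict Implicit. Unset Printing Implicit Defensive.
Import Order.TTheory GRing.Theory Num.Theory.
Local Open Scope ring_scope.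

Section Transformer.
Variable R : realFieldType.

Definition relu m n (M : 'M[R]_(m, n)) : 'M[R]_(m, n) := map_mx (fun x => Num.max x 0) M.

Definition argmax_set K (P : 'M[R]_K) (i : 'I_K) : {set 'I_K} :=
  [set k | [forall j, P i j <= P i k]].

Definition hardmax K (P : 'M[R]_K) : 'M[R]_K :=
  \matrix_(i, k) if k \in argmax_set P i then (#|argmax_set P i|%:R)^-1 else 0.

Record head (d : nat) := Head {
  WQ : 'M[R]_(d, 2); WK : 'M[R]_(d, 2); WV : 'M[R]_d }.

Definition psi K d (X : 'M[R]_(K, d)) (B : 'M[R]_K) (h : head d) : 'M[R]_(K, d) :=
  B *m hardmax ((X *m WQ h) *m (X *m WK h)^T) *m X *m WV h.

Record layer (d : nat) := Layer {
  heads_A : seq (head d);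
  heads_AT : seq (head d);
  heads_I : seq (head d);
  h1 : nat; h2 : nat; h3 : nat;
  W1 : 'M[R]_(d, h1); W2 : 'M[R]_(h1, h2); W3 : 'M[R]_(h2, h3); W4 : 'M[R]_(h3, d) }.

Definition f_attn K d (L : layer d) (X : 'M[R]_(K, d)) (At : 'M[R]_K) : 'M[R]_(K, d) :=
  \sum_(h <- heads_A L) psi X At h + \sum_(h <- heads_AT L) psi X At^T h
  + \sum_(h <- heads_I L) psi X 1%:M h + X.

Definition f_mlp K d (L : layer d) (X : 'M[R]_(K, d)) : 'M[R]_(K, d) :=
  let Z2 := relu (X *m W1 L) in
  let Z3 := relu (Z2 *m W2 L) in
  let Z4 := relu (Z3 *m W3 L) in
  Z4 *m W4 L + X.

Definition f_layer K d (L : layer d) (X : 'M[R]_(K, d)) (At : 'M[R]_K) : 'M[R]_(K, d) :=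
  f_mlp L (f_attn L X At).

Definition incident nv ne (edge : 'I_ne -> {set 'I_nv}) (w : 'I_ne -> R) : 'M[R]_(nv, ne) :=
  \matrix_(i, j) if i \in edge j then w j else 0.

(* Padded incident matrix: row/column 0 (the paper's index 1) is zero, and
   entry (i+1, j+1) (0-based) is A i j. *)
Definition pad nv ne K (A : 'M[R]_(nv, ne)) : 'M[R]_K :=
  \matrix_(i, j)
    if (0 < (i : nat))%N && (0 < (j : nat))%N then
      match @insub nat (fun n => n < nv)%N _ (i.-1), @insub nat (fun n => n < ne)%N _ (j.-1) with
      | Some i', Some j' => A i' j'
      | _, _ => 0
      end
    else 0.

(* Storage conventions (0-based row index: row 0 is the paper's "top row"). *)
Definition is_global_col K d (X : 'M[R]_(K, d)) (c : 'I_d) : Prop :=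
  forall i : 'I_K, X i c = (if (i : nat) == 0%N then 1 else 0).
Definition is_local_col K d (X : 'M[R]_(K, d)) (c : 'I_d) : Prop :=
  forall i : 'I_K, X i c = (if (i : nat) == 0%N then 0 else 1).
Definition is_zero_col K d (X : 'M[R]_(K, d)) (c : 'I_d) : Prop :=
  forall i : 'I_K, X i c = 0.

Definition compare_update K d (X : 'M[R]_(K, d)) (C D E : 'I_d) : 'M[R]_(K, d) :=
  \matrix_(i, j) if j == E then (if X i C < X i D then 1 else 0) else X i j.

End Transformer.

(* Main.v *)
Require Import Defs.
From HB Require Import structures.
From mathcomp Require Import all_boot all_order all_algebra.
From mathcomp Require Import ring lra.
Import Order.TTheory GRing.Theory Num.Theory.
Local Open Scope ring_scope.

Lemma sum_delta (R : pzRingType) n (v : 'I_n -> R) c r :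
  \sum_j v j * ((j == c)%:R * r) = v c * r.
Proof.
rewrite (bigD1 c) //= eqxx mul1r big1 ?addr0 // => j /negbTE ->.
by rewrite mul0r mulr0.
Qed.

Lemma sum_delta1 (R : pzRingType) n (v : 'I_n -> R) c :
  \sum_j v j * (j == c)%:R = v c.
Proof.
rewrite (bigD1 c) //= eqxx mulr1 big1 ?addr0 // => j /negbTE ->.
by rewrite mulr0.
Qed.

Definition cmp_head (R : realFieldType) d (C D G L S : 'I_d) : Defs.head R d :=
  @Head R d
       (\matrix_(j, t) (if (val t == 0)%N then (j == D)%:R else (j == C)%:R))
       (\matrix_(j, t) (if (val t == 0)%N then (j == G)%:R else (j == L)%:R))
       (\matrix_(j, j') ((j == G)%:R * (j' == S)%:R)).

Definition cW1 (R : realFieldType) d (E G L S : 'I_d) : 'M[R]_(d, 4) :=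
  \matrix_(l, t) ((l == S)%:R * nth 0 [:: 1; 2; 0; 0] t
                 + (l == G)%:R * nth 0 [:: 0; -1; 0; 0] t
                 + (l == L)%:R * nth 0 [:: 0; -1; 0; 0] t
                 + (l == E)%:R * nth 0 [:: 0; 0; 1; -1] t).

Definition cW4 (R : realFieldType) d (E S : 'I_d) : 'M[R]_(4, d) :=
  \matrix_(t, j) ((j == S)%:R * nth 0 [:: -1; 0; 0; 0] t
                 + (j == E)%:R * nth 0 [:: 0; 1; -1; 1] t).

Definition cLayer (R : realFieldType) d (C D E G L S : 'I_d) : layer R d :=
  @Layer R d [::] [::] [:: cmp_head R d C D G L S] 4 4 4 (cW1 R d E G L S) 1%:M 1%:M (cW4 R d E S).

Theorem lemmaC3 (R : realFieldType) (K d : nat) (Omega : R) (C D E G L S : 'I_d) :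
  (1 < K)%N -> 0 < Omega ->
  (* G = B_global, L = B_local, S = a scratchpad column *)
  uniq [:: G; L; S] -> E \notin [:: G; L; S] -> C != S -> D != S ->
  exists Ly : layer R d,
    forall (nv ne : nat) (edge : 'I_ne -> {set 'I_nv}) (w : 'I_ne -> R)
           (X : 'M[R]_(K, d)),
      (maxn nv ne < K)%N ->
      (forall i j, `|X i j| <= Omega) ->
      is_global_col X G -> is_local_col X L -> is_zero_col X S ->
      f_layer Ly X (pad K (incident edge w)) = compare_update X C D E.
Proof.
move: K => [|[|K]] // _ _ Hu HE _ _.
exists (cLayer R d C D E G L S) => nv ne edge w X _ _ HG HL HS.
move: Hu HE; rewrite /= !inE !negb_or => /andP[/andP[GL GS] /andP[LS _]] /and3P[EG EL ES].
set At := pad _ _.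
set P := (X *m WQ (cmp_head R d C D G L S)) *m (X *m WK (cmp_head R d C D G L S))^T.
have hP : forall i k, P i k = X i D * X k G + X i C * X k L.
  have hQ : forall (c1 c2 : 'I_d) i (t : 'I_2), (X *m \matrix_(j, t) (if (val t == 0)%N then (j == c1)%:R else (j == c2)%:R)) i t = if (val t == 0)%N then X i c1 else X i c2.
    move=> c1 c2 i0 t; rewrite mxE; under eq_bigr => j _ do rewrite mxE.
    by case: ifP => _; rewrite sum_delta1.
  move=> i k; rewrite /P mxE; under eq_bigr => t _ do rewrite [(_^T) _ _]mxE !hQ.
  rewrite !big_ord_recr big_ord0 /= add0r.
  by [].
pose a i := hardmax P i ord0.
have hY : forall i j, f_attn (cLayer R d C D E G L S) X At i j = X i j + (j == S)%:R * a i.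
  move=> i j; rewrite /f_attn /= !big_nil big_seq1 !add0r addrC !mxE; congr (_ + _).
  rewrite /psi /= mul1mx.
  under eq_bigr => k _ do rewrite mxE.
  rewrite sum_delta mxE mulrC; congr (_ * _).
  rewrite (bigD1 ord0) //= big1 ?addr0; first by rewrite HG /= mulr1.
  by move=> k k0; rewrite HG ifF ?mulr0 //; apply/negP => /eqP k0'; case/eqP: k0; apply/val_inj.
have reluK : forall m n (M : 'M[R]_(m, n)), relu (relu M *m 1%:M) = relu M.
  move=> m n M; rewrite mulmx1; apply/matrixP => p q; rewrite !mxE.
  by apply/max_idPl; rewrite le_max lexx orbT.
rewrite /f_layer /f_mlp /= !reluK.
set Y := f_attn _ X At.
have {}hY : forall i j, Y i j = X i j + (j == S)%:R * a i by exact: hY.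
clearbody Y.
have hGL : forall i, X i G + X i L = 1.
  by move=> i; rewrite HG HL; case: ifP; rewrite ?addr0 ?add0r.
have hW : forall i t, (Y *m cW1 R d E G L S) i t = a i * nth 0 [:: 1; 2; 0; 0] t
    + nth 0 [:: 0; -1; 0; 0] t + X i E * nth 0 [:: 0; 0; 1; -1] t.
  move=> i t; rewrite mxE; under eq_bigr => l _ do rewrite mxE !mulrDr.
  rewrite !big_split /= !sum_delta.
  rewrite !hY eqxx (negbTE GS) (negbTE LS) (negbTE ES) HS !mul0r !mul1r !addr0 add0r.
  by rewrite -(addrA (_ * _)) -mulrDl hGL mul1r.
apply/matrixP => i j; rewrite [LHS]mxE [in LHS]mxE.
under eq_bigr => t _ do rewrite /relu [map_mx _ _ _ _]mxE hW mxE.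
rewrite !big_ord_recl big_ord0 addr0 /= [X in _ = X]mxE hY.
rewrite !mulr0 !mulr1 !addr0 !add0r.
have hP' : forall k, P i k = if (val k == 0)%N then X i D else X i C.
  move=> k; rewrite hP HG HL; case: ifP => _; rewrite ?mulr0 ?mulr1 ?addr0 ?add0r //.
have ha : a i = if [forall k, P i k <= P i ord0] then (#|argmax_set P i|%:R)^-1 else 0.
  by rewrite /a mxE inE.
have [a0 hind] : 0 <= a i /\ Num.max (a i * 2 - 1) 0 = (if X i C < X i D then 1 else 0).
  rewrite ha; case: (ltgtP (X i C) (X i D)) => hCD.
  - have -> : argmax_set P i = [set ord0].
      apply/setP => k; rewrite !inE; apply/forallP/idP.
        move/(_ ord0); rewrite !hP' /=; case: ifP => k0.
          by move=> _; apply/eqP/val_inj/eqP.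
        by rewrite leNgt hCD.
      move/eqP=> ->{k} k; rewrite !hP' /=; case: ifP => // _; exact: ltW.
    have -> : [forall k, P i k <= P i ord0].
      by apply/forallP => k; rewrite !hP' /=; case: ifP => // _; exact: ltW.
    rewrite cards1 invr1 mul1r; split => //.
    have -> : (2 - 1 : R) = 1 by lra.
    by apply/max_idPl; rewrite ler01.
  - rewrite ifF; last first.
      apply/negP => /forallP /(_ ord_max); rewrite !hP' /=.
      by rewrite leNgt hCD.
    rewrite mul0r add0r; split => //; apply/max_idPr.
    by rewrite lerN10.
  - have hall : forall k, P i k <= P i ord0.
      by move=> k; rewrite !hP' /= hCD; case: ifP.
    have -> : argmax_set P i = setT.
      by apply/setP => k; rewrite !inE; apply/forallP => k'; rewrite !hP' hCD; case: ifP; case: ifP.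
    rewrite ifT; last by apply/forallP.
    rewrite cardsT card_ord.
    split; first by rewrite invr_ge0 ler0n.
    apply/max_idPr; rewrite subr_le0 ler_pdivrMl ?ltr0n // mulr1 ler_nat //.
have hx : forall x : R, Num.max x 0 - Num.max (- x) 0 = x.
  move=> x; case: (lerP 0 x) => hx.
    by rewrite (max_idPr _) ?subr0 // oppr_le0.
  by rewrite (max_idPl _) ?sub0r ?opprK // oppr_ge0 ltW.
case: (eqVneq j S) => [->|jS].
  by rewrite eq_sym (negbTE ES) !mul0r !mulr0 !addr0 HS add0r !mul1r mulrN1 (max_idPl a0) addNr.
case: (eqVneq j E) => [->|jE].
  rewrite (_ : true%:R = 1 :> R) // (_ : false%:R = 0 :> R) // !mul0r !mulr0 !mul1r !mulr1 ?add0r ?addr0 hind.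
  case: (lerP 0 (X i E)) => h.
    rewrite (max_idPr _); first by case: ifP => _; ring.
    lra.
  rewrite (max_idPl _); first by case: ifP => _; ring.
  lra.
by rewrite (_ : false%:R = 0 :> R) // !mul0r !mulr0 !add0r !addr0.
Qed.
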